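(* Let $T$ be a Fano tetrahedron in $\mathbb{Z}^3$ with vertices $x_1=(1,0,0)$, $x_2=(0,1,0)$, $x_3=(k''\lambda_4-a\lambda_1,\ k'\lambda_4-a\lambda_2,\ k\lambda_4)$, $x_4=(-k''\lambda_3-b\lambda_1,\ -k'\lambda_3-b\lambda_2,\ -k\lambda_3)$, where $\lambda_1\le\cdots\le\lambda_4$ are non-negative integers with $\gcd(\lambda_1,\ldots,\lambda_4)=1$ and $\sum_i\lambda_ix_i=0$, $a,b\in\mathbb{Z}$ with $a>0$ and $a\lambda_3+b\lambda_4=1$, and $k,k',k''\in\mathbb{N}$ with $0\le k''\lambda_4-a\lambda_1<k\lambda_4$ and $0\le k'\lambda_4-a\lambda_2<k\lambda_4$. Suppose that $k''\lambda_4-a\lambda_1=0$ or $k'\lambda_4-a\lambda_2=0$. Then $T$ is equivalent under $GL(3,\mathbb{Z})$ to the tetrahedron with vertices $e_1,e_2,e_3,-e_1-e_2-e_3$.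
   Context: A tetrahedron is called Fano if its vertices lie in $\mathbb{Z}^3$ and the only lattice point it contains other than its vertices is the origin, which lies strictly in its interior. $e_1,e_2,e_3$ is the standard basis of $\mathbb{Z}^3$. *)

(* Defs.v *)
From mathcomp Require Import all_boot all_order all_algebra.
Set Implicit Arguments. Unset Strict Implicit. Unset Printing Implicit Defensive.
Import Order.TTheory GRing.Theory Num.Theory.
Local Open Scope ring_scope.

Definition vec3 (a b c : int) : 'rV[int]_3 := \row_(j < 3) nth 0 [:: a; b; c] j.

Definition tet (v1 v2 v3 v4 : 'rV[int]_3) : 'I_4 -> 'rV[int]_3 :=
  fun i => nth 0 [:: v1; v2; v3; v4] i.

Definition ratv (v : 'rV[int]_3) : 'rV[rat]_3 := map_mx (fun z : int => z%:~R) v.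

Definition in_hull (X : 'I_4 -> 'rV[int]_3) (p : 'rV[int]_3) : Prop :=
  exists mu : 'I_4 -> rat, (forall i, 0 <= mu i) /\ \sum_i mu i = 1 /\
    ratv p = \sum_i mu i *: ratv (X i).

Definition in_open_simplex (X : 'I_4 -> 'rV[int]_3) (p : 'rV[int]_3) : Prop :=
  exists mu : 'I_4 -> rat, (forall i, 0 < mu i) /\ \sum_i mu i = 1 /\
    ratv p = \sum_i mu i *: ratv (X i).

Definition full_dim (X : 'I_4 -> 'rV[int]_3) : Prop :=
  \det (\matrix_(i < 3) (X (lift ord0 i) - X ord0)) != 0.

Definition fano (X : 'I_4 -> 'rV[int]_3) : Prop :=
  [/\ full_dim X, in_open_simplex X 0 &
      forall p, in_hull X p -> p = 0 \/ exists i, p = X i].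

(* GL(3,Z)-equivalence: a unimodular integer matrix maps the vertex set of X
   onto the vertex set of Y (row-vector convention x |-> x *m U). *)
Definition GL3Z_equiv (X Y : 'I_4 -> 'rV[int]_3) : Prop :=
  exists U : 'M[int]_3, U \in unitmx /\
    perm_eq [seq X i *m U | i <- enum 'I_4] [seq Y i | i <- enum 'I_4].

(* Main.v *)
Require Import Defs.
From mathcomp Require Import all_boot all_order all_algebra zify ring lra.
Import Order.TTheory GRing.Theory Num.Theory.
Local Open Scope ring_scope.

Definition o0 : 'I_4 := @Ordinal 4 0 isT.
Definition o1 : 'I_4 := @Ordinal 4 1 isT.
Definition o2 : 'I_4 := @Ordinal 4 2 isT.
Definition o3 : 'I_4 := @Ordinal 4 3 isT.

Lemma sum4 (V : nmodType) (F : 'I_4 -> V) : \sum_i F i = F o0 + F o1 + F o2 + F o3.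
Proof. rewrite !big_ord_recr big_ord0 /= add0r. congr (_ + _ + _ + _); by apply: congr1; apply: val_inj. Qed.

Lemma vec3E a b c j : vec3 a b c 0 j = nth 0 [:: a; b; c] j. Proof. by rewrite mxE. Qed.

Lemma ratv_sumE (X : 'I_4 -> 'rV[int]_3) (p : 'rV[int]_3) (t : 'I_4 -> rat) :
  (forall j : 'I_3, (p 0 j)%:~R = \sum_i t i * (X i 0 j)%:~R) ->
  ratv p = \sum_i t i *: ratv (X i).
Proof.
move=> H; apply/rowP => j; rewrite summxE mxE H; apply: eq_bigr => i _.
by rewrite !mxE.
Qed.

Lemma ratv0 : ratv 0 = 0.
Proof. by apply/rowP => j; rewrite !mxE. Qed.

Lemma fano_pt (X : 'I_4 -> 'rV[int]_3) (p : 'rV[int]_3) (t : 'I_4 -> rat) : fano X -> (forall i, 0 <= t i) ->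
  \sum_i t i <= 1 -> ratv p = \sum_i t i *: ratv (X i) ->
  p = 0 \/ exists i, p = X i.
Proof.
move=> [_ [mu [mupos [musum mueq]]] Hall] tpos tsum Hp.
apply: Hall.
pose s := 1 - \sum_i t i.
exists (fun i => t i + s * mu i); split; [|split].
- move=> i; apply: addr_ge0 => //; apply: mulr_ge0; last exact: ltW.
  by rewrite /s subr_ge0.
- by rewrite big_split /= -mulr_sumr musum mulr1 /s addrC subrK.
- under eq_bigr do rewrite scalerDl -scalerA.
  by rewrite big_split /= -scaler_sumr -mueq ratv0 scaler0 addr0.
Qed.

Definition tv (t0 t1 t2 t3 : rat) : 'I_4 -> rat := fun i => nth 0 [:: t0; t1; t2; t3] i.

Lemma third_coord (c1 c2 K e1 e2 e3 : int) (p : 'rV[int]_3) :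
  p 0 (@Ordinal 3 2 isT) = 1 -> K != 1 -> e3 <= 0 ->
  (p = 0 \/ exists i, p = tet (vec3 1 0 0) (vec3 0 1 0) (vec3 c1 c2 K) (vec3 e1 e2 e3) i) -> False.
Proof.
move=> Hp HK He [E|[i E]].
  by move: Hp; rewrite E mxE.
rewrite E {E p} in Hp; move: Hp; case: i => [[|[|[|[|//]]]] Hi] /=; rewrite vec3E /=.
- by [].
- by [].
- by move/eqP: HK.
- lia.
Qed.

Lemma core (c1 c2 K e1 e2 e3 : int) : 0 <= c1 < K -> 0 <= c2 < K -> e3 <= 0 ->
  (c1 = 0 \/ c2 = 0) ->
  fano (tet (vec3 1 0 0) (vec3 0 1 0) (vec3 c1 c2 K) (vec3 e1 e2 e3)) -> K = 1.
Proof.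
move=> H1 H2 He Hz HF.
have [//|K2] : K = 1 \/ 2 <= K by lia.
exfalso.
have HK1 : K != 1 by lia.
have Kr : (0 : rat) < K%:~R by rewrite ltr0z; lia.
have KE : (K%:~R : rat) != 0 by rewrite gt_eqF.
have Kinv : (0 : rat) <= K%:~R^-1 by rewrite invr_ge0 ltW.
case: Hz => Hz.
- have [c0|cp] : c2 = 0 \/ 1 <= c2 by lia.
  + apply: (@third_coord c1 c2 K e1 e2 e3 (vec3 0 0 1)); [by rewrite vec3E|done|done|].
    apply: (@fano_pt _ _ (tv 0 0 K%:~R^-1 0) HF).
    * by case=> [[|[|[|[|//]]]] Hi] /=.
    * rewrite sum4 /= !add0r addr0 invf_le1 //; rewrite ler1z; lia.
    * apply: ratv_sumE; case=> [[|[|[|//]]] Hi]; rewrite sum4 /tv /= !vec3E /= ?Hz ?c0;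
      rewrite ?mul0r ?mulr0 ?add0r ?addr0 //; by rewrite mulVf.
  + have c2r : (1 : rat) <= c2%:~R by rewrite ler1z.
    have c2K : (c2%:~R : rat) <= K%:~R by rewrite ler_int; lia.
    apply: (@third_coord c1 c2 K e1 e2 e3 (vec3 0 1 1)); [by rewrite vec3E|done|done|].
    apply: (@fano_pt _ _ (tv 0 (1 - c2%:~R / K%:~R) K%:~R^-1 0) HF).
    * case=> [[|[|[|[|//]]]] Hi] //=.
      by rewrite subr_ge0 ler_pdivrMr // mul1r.
    * rewrite sum4 /= !add0r addr0.
      have -> : 1 - c2%:~R / K%:~R + K%:~R^-1 = 1 - (c2%:~R - 1) / (K%:~R : rat) by field.
      rewrite lerBlDr lerDl divr_ge0 ?subr_ge0 //; exact: ltW.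
    * apply: ratv_sumE; case=> [[|[|[|//]]] Hi]; rewrite sum4 /tv /= !vec3E /= ?Hz;
      rewrite ?mul0r ?mulr0 ?add0r ?addr0 ?mulr1 //; by field.
- have [c0|cp] : c1 = 0 \/ 1 <= c1 by lia.
  + apply: (@third_coord c1 c2 K e1 e2 e3 (vec3 0 0 1)); [by rewrite vec3E|done|done|].
    apply: (@fano_pt _ _ (tv 0 0 K%:~R^-1 0) HF).
    * by case=> [[|[|[|[|//]]]] Hi] /=.
    * rewrite sum4 /= !add0r addr0 invf_le1 //; rewrite ler1z; lia.
    * apply: ratv_sumE; case=> [[|[|[|//]]] Hi]; rewrite sum4 /tv /= !vec3E /= ?Hz ?c0;
      rewrite ?mul0r ?mulr0 ?add0r ?addr0 //; by rewrite mulVf.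
  + have c2r : (1 : rat) <= c1%:~R by rewrite ler1z.
    have c2K : (c1%:~R : rat) <= K%:~R by rewrite ler_int; lia.
    apply: (@third_coord c1 c2 K e1 e2 e3 (vec3 1 0 1)); [by rewrite vec3E|done|done|].
    apply: (@fano_pt _ _ (tv (1 - c1%:~R / K%:~R) 0 K%:~R^-1 0) HF).
    * case=> [[|[|[|[|//]]]] Hi] //=.
      by rewrite subr_ge0 ler_pdivrMr // mul1r.
    * rewrite sum4 /=.
      have -> : 1 - c1%:~R / K%:~R + 0 + K%:~R^-1 + 0 = 1 - (c1%:~R - 1) / (K%:~R : rat) by field.
      rewrite lerBlDr lerDl divr_ge0 ?subr_ge0 //; exact: ltW.
    * apply: ratv_sumE; case=> [[|[|[|//]]] Hi]; rewrite sum4 /tv /= !vec3E /= ?Hz;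
      rewrite ?mul0r ?mulr0 ?add0r ?addr0 ?mulr1 //; by field.
Qed.

Lemma core2 (c2 K e2 e3 : int) :
  fano (tet (vec3 1 0 0) (vec3 0 1 0) (vec3 0 c2 K) (vec3 0 e2 e3)) -> False.
Proof.
move=> [_ [mu [mupos [_ mueq]]] _].
have := congr1 (fun v : 'rV[rat]_3 => v 0 (@Ordinal 3 0 isT)) mueq.
rewrite /= ratv0 summxE sum4 !mxE /= !mulr0 !addr0 mulr1.
by move=> E; have := mupos o0; rewrite -E ltxx.
Qed.

Theorem proposition3p2 (l1 l2 l3 l4 : nat) (a b : int) (k k' k'' : nat) :
  (l1 <= l2)%N -> (l2 <= l3)%N -> (l3 <= l4)%N ->
  gcdn (gcdn (gcdn l1 l2) l3) l4 = 1%N ->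
  0 < a -> a * l3%:Z + b * l4%:Z = 1 ->
  let x1 := vec3 1 0 0 in
  let x2 := vec3 0 1 0 in
  let x3 := vec3 (k''%:Z * l4%:Z - a * l1%:Z) (k'%:Z * l4%:Z - a * l2%:Z)
                 (k%:Z * l4%:Z) in
  let x4 := vec3 (- (k''%:Z * l3%:Z) - b * l1%:Z) (- (k'%:Z * l3%:Z) - b * l2%:Z)
                 (- (k%:Z * l3%:Z)) in
  l1%:Z *: x1 + l2%:Z *: x2 + l3%:Z *: x3 + l4%:Z *: x4 = 0 ->
  0 <= k''%:Z * l4%:Z - a * l1%:Z < k%:Z * l4%:Z ->
  0 <= k'%:Z * l4%:Z - a * l2%:Z < k%:Z * l4%:Z ->
  fano (tet x1 x2 x3 x4) ->
  (k''%:Z * l4%:Z - a * l1%:Z = 0 \/ k'%:Z * l4%:Z - a * l2%:Z = 0) ->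
  GL3Z_equiv (tet x1 x2 x3 x4)
    (tet (vec3 1 0 0) (vec3 0 1 0) (vec3 0 0 1) (vec3 (-1) (-1) (-1))).
Proof.
move=> h12 h23 h34 _ ha hab x1 x2 x3 x4 _ H1 H2 HF Hz.
have He : - (k%:Z * l3%:Z) <= 0 by lia.
have HK := @core _ _ _ _ _ _ H1 H2 He Hz HF.
have {HK} [Hk Hl4] : k = 1%N /\ l4 = 1%N by move: HK; rewrite -PoszM => -[] /eqP; rewrite muln_eq1 => /andP [/eqP -> /eqP ->].
subst k l4.
have l3le : (l3 <= 1)%N by [].
have [l10|l1p] : l1 = 0%N \/ l1 = 1%N by lia.
  exfalso; subst l1.
  have k0 : k'' = 0%N by lia.
  subst k''.
  apply: (@core2 (k'%:Z * 1%:Z - a * l2%:Z) (1%:Z * 1%:Z) (- (k'%:Z * l3%:Z) - b * l2%:Z) (- (1%:Z * l3%:Z))).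
  move: HF; rewrite /x3 /x4.
  have -> : (0%:Z * 1%:Z - a * 0%:Z) = 0 by lia.
  by have -> : (- (0%:Z * l3%:Z) - b * 0%:Z) = 0 by lia.
subst l1.
have [? ?] : l2 = 1%N /\ l3 = 1%N by lia.
subst l2 l3.
have E3 : x3 = vec3 0 0 1 by rewrite /x3; congr vec3; lia.
have E4 : x4 = vec3 (-1) (-1) (-1) by rewrite /x4; congr vec3; lia.
exists 1%:M; split; first exact: unitmx1.
rewrite E3 /x1 /x2 E4.
by under eq_map do rewrite mulmx1.

Qed.
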